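(* Let $A, B \in \mathbb{R}^{n\times n}_+$ be entrywise nonnegative Schur-stable matrices, and assume at least one of $A$, $B$ is irreducible. Suppose there exists a vector $v\in\mathbb{R}^n$ with all entries strictly positive such that (1) $v^TA\le v^T$ and $v^TB\le v^T$ (entrywise), and (2) every entry of $v^T(A+B)$ is strictly less than the corresponding entry of $2v^T$. Let $\mathcal{D}_{A,B}$ be the set of diagonal matrices $D\in\mathbb{R}^{n\times n}$ with nonnegative diagonal entries such that $A-D$ and $B-D$ are both entrywise nonnegative. Then for every $D\in\mathcal{D}_{A,B}$ the matrix $$M=\begin{pmatrix} A-D & D\\ D & B-D\end{pmatrix}$$ is Schur-stable.
   Context: A real square matrix is Schur-stable if its spectral radius is strictly less than $1$. A matrix $A\in\mathbb{R}^{n\times n}$ is reducible if there exist nonempty disjoint sets $I,J$ with $I\cup J=\{1,\dots,n\}$ such that $a_{ij}=0$ for all $i\in I$, $j\in J$; otherwise it is irreducible. $\mathbb{R}^{n\times n}_+$ denotes the set of entrywise nonnegative $n\times n$ real matrices. A vector $v$ as in the hypothesis is said to define a joint linear copositive Lyapunov function $V(x)=v^Tx$ for $A,B$. *)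

(* Defs.v *)
(* Real matrices over an arbitrary realType R (a model of the reals);
   eigenvalues are taken in the algebraic closure complex R = R[i]. *)
From HB Require Import structures.
From mathcomp Require Import all_boot all_order all_algebra.
From mathcomp Require Import complex.
From mathcomp Require Import reals.
Set Implicit Arguments. Unset Strict Implicit. Unset Printing Implicit Defensive.
Import Order.TTheory GRing.Theory Num.Theory.
Local Open Scope ring_scope.

Definition schur_stable (R : realType) (n : nat) (A : 'M[R]_n) : Prop :=
  forall z : R[i], root (char_poly (map_mx (fun x : R => x%:C%C) A)) z -> `|z| < 1.

(* Reducibility as in the paper: there are nonempty disjoint I, J covering
   {1..n} (J = complement of I) with a_ij = 0 for all i in I, j in J. *)
Definition reducible (R : realType) (n : nat) (A : 'M[R]_n) : Prop :=
  exists I : {set 'I_n}, [/\ I != set0, I != setT &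
    forall i j, i \in I -> j \notin I -> A i j = 0].

Definition irreducible (R : realType) (n : nat) (A : 'M[R]_n) : Prop :=
  ~ reducible A.

Definition nonneg_mx (R : realType) (m n : nat) (A : 'M[R]_(m, n)) : Prop :=
  forall i j, 0 <= A i j.

(* Main.v *)
Require Import Defs.
From HB Require Import structures.
From mathcomp Require Import all_boot all_order all_algebra.
From mathcomp Require Import complex.
From mathcomp Require Import reals.
From mathcomp Require Import lra.
Import Order.TTheory GRing.Theory Num.Theory.
Local Open Scope ring_scope.

Local Notation cmx M := (map_mx (fun x => x%:C%C) M).

Lemma char_poly_tr (F : comNzRingType) n (A : 'M[F]_n) :
  char_poly A^T = char_poly A.
Proof.
rewrite /char_poly -det_tr; congr (\det _).
rewrite /char_poly_mx; apply/matrixP => i j; rewrite !mxE eq_sym; done.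
Qed.

Lemma addE (V : nmodType) m n (A B : 'M[V]_(m, n)) i j :
  (A + B) i j = A i j + B i j.
Proof. by rewrite mxE. Qed.

Lemma subE (V : zmodType) m n (A B : 'M[V]_(m, n)) i j :
  (A - B) i j = A i j - B i j.
Proof. by rewrite !mxE. Qed.

Lemma mapE (S T : Type) (f : S -> T) m n (A : 'M[S]_(m, n)) i j :
  (map_mx f A) i j = f (A i j).
Proof. by rewrite mxE. Qed.

Lemma Lsum (C : numDomainType) m (a : 'rV[C]_m) (b : 'cV_m) :
  (forall j, 0 <= a 0 j) -> (forall j, 0 <= b j 0) ->
  0 <= (a *m b) 0 0 /\ ((a *m b) 0 0 = 0 -> forall j, a 0 j * b j 0 = 0).
Proof.
move=> ha hb; have h j : 0 <= a 0 j * b j 0 by apply: mulr_ge0.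
rewrite mxE; split; first by apply: sumr_ge0.
by move=> s0 j; apply: (psumr_eq0P _ s0).
Qed.

Lemma Lnn (C : numDomainType) m p (K : 'M[C]_(m, p)) (b : 'cV_p) :
  (forall i j, 0 <= K i j) -> (forall j, 0 <= b j 0) ->
  forall i, 0 <= (K *m b) i 0.
Proof.
move=> hK hb i; rewrite mxE; apply: sumr_ge0 => j _; exact: mulr_ge0.
Qed.

Lemma L1 (C : numDomainType) N (K : 'M[C]_N) (X : 'cV_N) z :
  (forall i j, 0 <= K i j) -> K *m X = z *: X -> 1 <= `|z| ->
  forall i, `|X i 0| <= (K *m map_mx (@Num.norm _ _) X) i 0.
Proof.
move=> nK hX z1 i.
apply: (@le_trans _ _ `|(K *m X) i 0|).
  by rewrite hX mxE normrM ler_peMl.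
rewrite mxE; apply: le_trans (ler_norm_sum _ _ _) _.
rewrite mxE; apply: ler_sum => j _.
by rewrite normrM mxE (ger0_norm (nK i j)).
Qed.

Lemma Ldiag (R : realType) n (D : 'M[R]_n) (u : 'cV[R[i]]_n) j :
  is_diag_mx D -> (cmx D *m u) j 0 = (D j j)%:C%C * u j 0.
Proof.
move/is_diag_mxP => dD.
rewrite mxE (bigD1 j) //= big1 ?addr0 ?mxE // => k kj.
by rewrite mxE dD ?rmorph0 ?mul0r // eq_sym.
Qed.

Lemma eig1 (C : fieldType) n (K : 'M[C]_n) (u : 'cV_n) :
  u != 0 -> K *m u = u -> root (char_poly K) 1.
Proof.
move=> un0 h; rewrite -char_poly_tr -eigenvalue_root_char.
apply/eigenvalueP; exists u^T; first by rewrite -trmx_mul h scale1r.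
by rewrite trmx_eq0.
Qed.

Lemma block_nn (R : realType) n (P Q S T : 'M[R]_n) :
  nonneg_mx P -> nonneg_mx Q -> nonneg_mx S -> nonneg_mx T ->
  nonneg_mx (block_mx P Q S T).
Proof.
move=> hP hQ hS hT i j.
rewrite -(splitK i) -(splitK j).
case: (split i) => i'; case: (split j) => j' /=.
- by rewrite block_mxEul.
- by rewrite block_mxEur.
- by rewrite block_mxEdl.
- by rewrite block_mxEdr.
Qed.

Theorem theorem3 (R : realType) (n : nat) (A B : 'M[R]_n) :
  nonneg_mx A -> nonneg_mx B ->
  schur_stable A -> schur_stable B ->
  irreducible A \/ irreducible B ->
  (exists v : 'rV[R]_n,
      (forall i, 0 < v 0 i) /\
      (forall j, (v *m A) 0 j <= v 0 j) /\
      (forall j, (v *m B) 0 j <= v 0 j) /\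
      (forall j, (v *m (A + B)) 0 j < 2 * v 0 j)) ->
  forall D : 'M[R]_n,
    is_diag_mx D -> (forall i, 0 <= D i i) ->
    nonneg_mx (A - D) -> nonneg_mx (B - D) ->
    schur_stable (block_mx (A - D) D D (B - D)).
Proof.
move=> nnA nnB sA sB _ [v [vpos [vA [vB vAB]]]] D dD Dpos nnAD nnBD z rz.
rewrite real_ltNge ?normr_real ?real1 //; apply/negP => z1.
have nnD : nonneg_mx D.
  move=> i j; case: (eqVneq i j) => [->|ij]; first exact: Dpos.
  by move/is_diag_mxP: dD => ->.
set M := block_mx (A - D) D D (B - D).
have nnM : nonneg_mx M by apply: block_nn.
have nnMc : forall i j, 0 <= cmx M i j by move=> i j; rewrite mxE ler0c.
have rzT : root (char_poly (cmx M)^T) z by rewrite char_poly_tr.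
rewrite -eigenvalue_root_char in rzT; case/eigenvalueP: rzT => x hx xn0.
set X := x^T.
have hX : cmx M *m X = z *: X.
  by rewrite /X -(trmxK (cmx M)) -trmx_mul hx linearZ.
set y := map_mx (@Num.norm _ _) X.
have y0 : forall k, 0 <= y k 0 by move=> k; rewrite mxE.
have yn0 : y != 0.
  apply: contra xn0 => /eqP y0'; rewrite -trmx_eq0; apply/eqP/matrixP => i j.
  move/matrixP: y0' => /(_ i j); rewrite !mxE => /eqP.
  by rewrite normr_eq0 => /eqP.
have Pge := @L1 _ _ _ _ _ nnMc hX z1.
set vc := cmx v.
set W := row_mx vc vc.
have WM : W *m cmx M = row_mx (vc *m cmx A) (vc *m cmx B).
  rewrite /M map_block_mx mul_row_block !map_mxB !mulmxBr.
  by rewrite subrK addrC subrK.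
set Q := W - W *m cmx M.
have QE : Q = row_mx (cmx (v - v *m A)) (cmx (v - v *m B)).
  by rewrite /Q WM opp_row_mx add_row_mx !map_mxB !map_mxM.
set P := cmx M *m y - y.
have key : (W *m P) 0 0 + (Q *m y) 0 0 = 0.
  have k0 : W *m P + Q *m y = 0.
    by rewrite /P /Q mulmxBr mulmxBl mulmxA addrA subrK subrr.
  by move/matrixP: k0 => /(_ 0 0); rewrite addE => ->; rewrite mxE.
have nnW : forall k, 0 < W 0 k.
  move=> k; rewrite -(splitK k); case: (split k) => j /=.
  - by rewrite row_mxEl mapE ltcR.
  - by rewrite row_mxEr mapE ltcR.
have nnQ : forall k, 0 <= Q 0 k.
  move=> k; rewrite QE -(splitK k); case: (split k) => j /=.
  - by rewrite row_mxEl mapE ler0c subE subr_ge0.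
  - by rewrite row_mxEr mapE ler0c subE subr_ge0.
have yE : forall k, y k 0 = `|X k 0| by move=> k; rewrite mapE.
have nnP : forall k, 0 <= P k 0.
  by move=> k; rewrite subE subr_ge0 yE; exact: Pge.
have nnW' : forall k, 0 <= W 0 k by move=> k; exact: ltW.
have [WP0 Qy0] : (W *m P) 0 0 = 0 /\ (Q *m y) 0 0 = 0.
  have [h1 _] := @Lsum _ _ _ _ nnW' nnP.
  have [h2 _] := @Lsum _ _ _ _ nnQ y0.
  by move/eqP: key; rewrite paddr_eq0 // => /andP[/eqP -> /eqP ->].
have MP : cmx M *m y = y.
  apply/matrixP => k j; rewrite (ord1 j).
  have := (@Lsum _ _ _ _ nnW' nnP).2 WP0 k.
  move/eqP; rewrite mulf_eq0 gt_eqF //= subE subr_eq0 => /eqP //.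
set y1 := usubmx y; set y2 := dsubmx y.
have y10 : forall j, 0 <= y1 j 0 by move=> j; rewrite /y1 mxE.
have y20 : forall j, 0 <= y2 j 0 by move=> j; rewrite /y2 mxE.
have Qy : (cmx (v - v *m A) *m y1) 0 0 + (cmx (v - v *m B) *m y2) 0 0 = 0.
  by rewrite -addE -mul_row_col -QE /y1 /y2 vsubmxK.
have nq1 : forall j, 0 <= cmx (v - v *m A) 0 j.
  by move=> j; rewrite mapE ler0c subE subr_ge0.
have nq2 : forall j, 0 <= cmx (v - v *m B) 0 j.
  by move=> j; rewrite mapE ler0c subE subr_ge0.
have [q1 q2] : (cmx (v - v *m A) *m y1) 0 0 = 0 /\ (cmx (v - v *m B) *m y2) 0 0 = 0.
  have [h1 _] := @Lsum _ _ _ _ nq1 y10.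
  have [h2 _] := @Lsum _ _ _ _ nq2 y20.
  by move/eqP: Qy; rewrite paddr_eq0 // => /andP[/eqP -> /eqP ->].
have q1j := (@Lsum _ _ _ _ nq1 y10).2 q1.
have q2j := (@Lsum _ _ _ _ nq2 y20).2 q2.
have disj : forall j, y1 j 0 = 0 \/ y2 j 0 = 0.
  move=> j.
  have : 0 < v 0 j - (v *m A) 0 j \/ 0 < v 0 j - (v *m B) 0 j.
    have := vAB j; rewrite mulmxDr addE => h.
    case: (ltP 0 (v 0 j - (v *m A) 0 j)) => h1; first by left.
    right; lra.
  case=> h; [left; have := q1j j | right; have := q2j j];
    rewrite mapE subE => /eqP; rewrite mulf_eq0 gt_eqF ?ltcR //= => /eqP //.
have := MP; rewrite -(vsubmxK y) -/y1 -/y2 /M map_block_mx mul_block_col.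
move=> /eq_col_mx [e1 e2].
have nAD : forall i j, 0 <= cmx (A - D) i j by move=> i j; rewrite mapE ler0c.
have nBD : forall i j, 0 <= cmx (B - D) i j by move=> i j; rewrite mapE ler0c.
have Ay : cmx A *m y1 = y1.
  apply/matrixP => j k; rewrite (ord1 k).
  have eA : cmx A = cmx (A - D) + cmx D by rewrite map_mxB subrK.
  rewrite eA mulmxDl addE (@Ldiag _ _ D _ _ dD).
  move/matrixP: e1 => /(_ j 0); rewrite addE (@Ldiag _ _ D _ _ dD) => e1j.
  move/matrixP: e2 => /(_ j 0); rewrite addE (@Ldiag _ _ D _ _ dD) => e2j.
  have a0 := @Lnn _ _ _ _ _ nAD y10 j.
  have b0 := @Lnn _ _ _ _ _ nBD y20 j.
  have d0 : 0 <= (D j j)%:C%C by rewrite ler0c.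
  case: (disj j) => h; rewrite h in e1j e2j *.
  - move/eqP: e1j; rewrite paddr_eq0 ?mulr_ge0 // => /andP[/eqP -> _].
    by rewrite mulr0 addr0.
  - move/eqP: e2j; rewrite paddr_eq0 ?mulr_ge0 // => /andP[/eqP -> _].
    by rewrite -e1j mulr0.
have By : cmx B *m y2 = y2.
  apply/matrixP => j k; rewrite (ord1 k).
  have eB : cmx B = cmx (B - D) + cmx D by rewrite map_mxB subrK.
  rewrite eB mulmxDl addE (@Ldiag _ _ D _ _ dD).
  move/matrixP: e1 => /(_ j 0); rewrite addE (@Ldiag _ _ D _ _ dD) => e1j.
  move/matrixP: e2 => /(_ j 0); rewrite addE (@Ldiag _ _ D _ _ dD) => e2j.
  have a0 := @Lnn _ _ _ _ _ nAD y10 j.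
  have b0 := @Lnn _ _ _ _ _ nBD y20 j.
  have d0 : 0 <= (D j j)%:C%C by rewrite ler0c.
  case: (disj j) => h; rewrite h in e1j e2j *.
  - move/eqP: e1j; rewrite paddr_eq0 ?mulr_ge0 // => /andP[_ /eqP ->].
    by rewrite -e2j mulr0 add0r addr0.
  - move/eqP: e2j; rewrite addrC paddr_eq0 ?mulr_ge0 // => /andP[/eqP -> _].
    by rewrite mulr0 addr0.
have : y1 != 0 \/ y2 != 0.
  case: (eqVneq y1 0) => [h1|]; last by left.
  case: (eqVneq y2 0) => [h2|]; last by right.
  by move: yn0; rewrite -(vsubmxK y) -/y1 -/y2 h1 h2 col_mx_eq0 !eqxx.
case=> h.
- by have := sA 1 (@eig1 _ _ _ _ h Ay); rewrite normr1 ltxx.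
- by have := sB 1 (@eig1 _ _ _ _ h By); rewrite normr1 ltxx.
Qed.
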